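(* Let $C\subset\mathbb{R}^n$ be a nonempty closed convex set, let $v\in\mathbb{R}^n$, $u\in C$, and let $\gamma\ge 0$ and $\theta,\lambda\in[0,1/2)$. Let $\varphi_{\gamma,\theta,\lambda}$ be a relative error tolerance function and let $w\in\mathcal{P}_C(\varphi_{\gamma,\theta,\lambda},u,v)$. Then $$\|w-x\|^2\le \|v-x\|^2+\frac{2\gamma+2\lambda}{1-2\lambda}\|v-u\|^2\qquad\text{for all } x\in C.$$
   Context: A relative error tolerance function with forcing parameters $\gamma,\theta,\lambda\ge 0$ is any function $\varphi_{\gamma,\theta,\lambda}:\mathbb{R}^n\times\mathbb{R}^n\times\mathbb{R}^n\to[0,\infty)$ satisfying $\varphi_{\gamma,\theta,\lambda}(u,v,w)\le \gamma\|v-u\|^2+\theta\|w-v\|^2+\lambda\|w-u\|^2$ for all $u,v,w\in\mathbb{R}^n$. For a closed convex set $C$ and $u\in C$, the feasible inexact projection set of $v\in\mathbb{R}^n$ relative to $u$ is $\mathcal{P}_C(\varphi_{\gamma,\theta,\lambda},u,v):=\{w\in C:\ \langle v-w,z-w\rangle\le \varphi_{\gamma,\theta,\lambda}(u,v,w)\ \text{for all } z\in C\}$. *)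

(* Defs.v *)
From HB Require Import structures.
From mathcomp Require Import all_boot all_order all_algebra.
From mathcomp Require Import all_classical all_reals all_analysis.
Set Implicit Arguments. Unset Strict Implicit. Unset Printing Implicit Defensive.
Import Order.TTheory GRing.Theory Num.Theory.
Import numFieldNormedType.Exports.
Local Open Scope ring_scope.
Local Open Scope classical_set_scope.

(* R^n is modelled as row vectors 'rV[R]_n over R : realType. *)

Definition dotv (R : realType) (n : nat) (u v : 'rV[R]_n) : R :=
  \sum_(i < n) u 0 i * v 0 i.

Definition sqnorm (R : realType) (n : nat) (u : 'rV[R]_n) : R := dotv u u.

Definition rel_err_tol (R : realType) (n : nat)
  (gamma theta lambda : R) (phi : 'rV[R]_n -> 'rV[R]_n -> 'rV[R]_n -> R) :=
  forall u v w : 'rV[R]_n,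
    0 <= phi u v w /\
    phi u v w <= gamma * sqnorm (v - u) + theta * sqnorm (w - v)
                 + lambda * sqnorm (w - u).

Definition inexact_proj (R : realType) (n : nat) (C : set 'rV[R]_n)
  (phi : 'rV[R]_n -> 'rV[R]_n -> 'rV[R]_n -> R) (u v : 'rV[R]_n)
  : set 'rV[R]_n :=
  [set w | C w /\ forall z, C z -> dotv (v - w) (z - w) <= phi u v w].

(* Main.v *)
Require Import Defs.
From HB Require Import structures.
From mathcomp Require Import all_boot all_order all_algebra.
From mathcomp Require Import all_classical all_reals all_analysis.
From mathcomp Require Import ring lra.
Import Order.TTheory GRing.Theory Num.Theory.
Import numFieldNormedType.Exports.
Local Open Scope ring_scope.
Local Open Scope classical_set_scope.

Lemma key_id (R : realType) (n : nat) (v w x : 'rV[R]_n) :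
  sqnorm (w - x) = sqnorm (v - x) - sqnorm (v - w) + 2 * dotv (v - w) (x - w).
Proof.
rewrite /sqnorm /dotv.
transitivity (\sum_(i < n) ((v - x) 0 i * (v - x) 0 i - (v - w) 0 i * (v - w) 0 i
   + 2 * ((v - w) 0 i * (x - w) 0 i))).
  by apply: eq_bigr => i _; rewrite !mxE; ring.
by rewrite big_split /= sumrB mulr_sumr.
Qed.

Lemma sq_sym (R : realType) (n : nat) (a b : 'rV[R]_n) :
  sqnorm (a - b) = sqnorm (b - a).
Proof. by rewrite /sqnorm /dotv; apply: eq_bigr => i _; rewrite !mxE; ring. Qed.

Lemma sq_ge0 (R : realType) (n : nat) (a : 'rV[R]_n) : 0 <= sqnorm a.
Proof. by rewrite /sqnorm /dotv; apply: sumr_ge0 => i _; rewrite -expr2 sqr_ge0. Qed.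

Lemma arith (R : realType) (gamma theta lambda A B D E F P d1 d2 : R) :
  0 <= gamma -> 0 <= theta -> theta < 1 / 2 -> 0 <= lambda -> lambda < 1 / 2 ->
  0 <= D -> 0 <= E -> 0 <= F ->
  P <= gamma * F + theta * D + lambda * E ->
  d1 <= P -> d2 <= P ->
  A = B - D + 2 * d1 -> E = F - D + 2 * d2 ->
  A <= B + (2 * gamma + 2 * lambda) / (1 - 2 * lambda) * F.
Proof.
move=> g0 t0 t1 l0 l1 D0 E0 F0 Hp d1P d2P eA eE.
have k0 : 0 < 1 - 2 * lambda by lra.
have tD : theta * D <= 1/2 * D by apply: ler_wpM2r => //; lra.
have gF : 0 <= gamma * F by apply: mulr_ge0.
have lE : 0 <= lambda * E by apply: mulr_ge0.
have hE : E - 2 * (lambda * E) <= F + 2 * (gamma * F) by lra.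
have hl : lambda * (E - 2 * (lambda * E)) <= lambda * (F + 2 * (gamma * F))
  by apply: ler_wpM2l.
have hA : A <= B + 2 * (gamma * F) + 2 * (lambda * E) by lra.
have -> : (2 * gamma + 2 * lambda) / (1 - 2 * lambda) * F
   = (2 * (gamma * F) + 2 * (lambda * E)) + 2 * (lambda * (F + 2 * (gamma * F))
       - lambda * (E - 2 * (lambda * E))) / (1 - 2 * lambda).
  by field; lra.
have : 0 <= 2 * (lambda * (F + 2 * (gamma * F))
       - lambda * (E - 2 * (lambda * E))) / (1 - 2 * lambda).
  apply: divr_ge0; lra.
lra.
Qed.

Theorem lemma6 (R : realType) (n : nat) (C : set 'rV[R]_n)
  (v u w : 'rV[R]_n) (gamma theta lambda : R)
  (phi : 'rV[R]_n -> 'rV[R]_n -> 'rV[R]_n -> R) :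
  C !=set0 -> closed C -> convex_set C ->
  C u ->
  0 <= gamma -> 0 <= theta -> theta < 1 / 2 -> 0 <= lambda -> lambda < 1 / 2 ->
  rel_err_tol gamma theta lambda phi ->
  inexact_proj C phi u v w ->
  forall x, C x ->
    sqnorm (w - x) <= sqnorm (v - x)
      + (2 * gamma + 2 * lambda) / (1 - 2 * lambda) * sqnorm (v - u).
Proof.
move=> _ _ _ Cu g0 t0 t1 l0 l1 Hphi [Cw Hw] x Cx.
have [_ Hp] := Hphi u v w.
rewrite (@sq_sym _ _ w v) in Hp.
have H := @arith _ _ _ _ _ _ _ _ _ _ _ _ g0 t0 t1 l0 l1 (@sq_ge0 _ _ (v - w)) (@sq_ge0 _ _ (w - u))
  (@sq_ge0 _ _ (v - u)) Hp (Hw x Cx) (Hw u Cu) (@key_id _ _ v w x) (@key_id _ _ v w u).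
exact: H.
Qed.
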